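(* For all $m,t\in\mathbb{N}$, \[ R_t(1,m) \leq \left(1-\frac{1}{2^t}\right)2^m-\frac{\sqrt{2^t-1}}{2^t}\,2^{m/2}. \]
   Context: For a $t\times n$ matrix $\mathbf{v}$ over $\mathbb{F}_2$ with rows $\overline{v}_1,\dots,\overline{v}_t$, $\mathrm{wt}^{(t)}(\mathbf{v})=\left|\bigcup_{i} \mathrm{supp}(\overline{v}_i)\right|$ and $d^{(t)}(\mathbf{u},\mathbf{v})=\mathrm{wt}^{(t)}(\mathbf{u}-\mathbf{v})$. For a linear code $C\subseteq\mathbb{F}_2^n$, $C^t$ is the set of $t\times n$ matrices all of whose rows lie in $C$, and $R_t(C)$ is the smallest integer $\rho$ such that for every $\mathbf{v}\in\mathbb{F}_2^{t\times n}$ some $\mathbf{c}\in C^t$ has $d^{(t)}(\mathbf{v},\mathbf{c})\le\rho$. $\mathrm{RM}(1,m)$ is the first-order binary Reed–Muller code of length $2^m$ (evaluations of all affine functions $\mathbb{F}_2^m\to\mathbb{F}_2$; dimension $m+1$), with $\mathrm{RM}(1,1)=\mathbb{F}_2^2$. $R_t(1,m)=R_t(\mathrm{RM}(1,m))$. *)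

(* Defs.v *)
(* Binary words over F_2 are represented with bool (xor = addition). *)
From HB Require Import structures.
From mathcomp Require Import all_boot all_order all_algebra.
Set Implicit Arguments. Unset Strict Implicit. Unset Printing Implicit Defensive.
Import Order.TTheory GRing.Theory Num.Theory.

Definition pt (m : nat) := {ffun 'I_m -> bool}.
Definition word (P : finType) := {ffun P -> bool}.
Definition tmat (t : nat) (P : finType) := {ffun 'I_t -> word P}.

Definition wt_t (t : nat) (P : finType) (v : tmat t P) : nat :=
  #|[set p : P | [exists i : 'I_t, v i p]]|.

Definition d_t (t : nat) (P : finType) (u v : tmat t P) : nat :=
  wt_t [ffun i => [ffun p => u i p (+) v i p]].

Definition in_Ct (t : nat) (P : finType) (C : {set word P}) (c : tmat t P) : bool :=
  [forall i : 'I_t, c i \in C].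

Definition covers_t (t : nat) (P : finType) (C : {set word P}) (rho : nat) : bool :=
  [forall v : tmat t P, exists c : tmat t P, in_Ct C c && (d_t v c <= rho)].

(* Since d_t <= #|P| always, it suffices
   to search rho in [0, #|P|]; for C containing 0 (any linear code) rho = #|P|
   works, so this is exactly the least such integer. *)
Definition Rt (t : nat) (P : finType) (C : {set word P}) : nat :=
  \big[minn/#|P|]_(rho < #|P|.+1 | covers_t t C rho) rho.

Definition RM1 (m : nat) : {set word (pt m)} :=
  [set c : word (pt m) | [exists a0 : bool, exists a : {ffun 'I_m -> bool},
     [forall x : pt m, c x == a0 (+) \big[addb/false]_(i < m) (a i && x i)]]].

Definition Rt1 (t m : nat) : nat := Rt t (RM1 m).

(* Main.v *)
Require Import Defs.
From mathcomp Require Import all_boot all_order all_algebra.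
From mathcomp Require Import reals.
From mathcomp Require Import ring lra.
Import Order.TTheory GRing.Theory Num.Theory.
Local Open Scope ring_scope.

Lemma real_step (R : realType) (N k x y : R) : 0 <= N -> 1 <= k -> 0 <= x ->
  N + Num.sqrt ((k - 1) * N) <= k * x -> x + Num.sqrt x <= 2 * y ->
  N + Num.sqrt ((2 * k - 1) * N) <= 2 * k * y.
Proof.
move=> N0 k1 x0 h1 h2.
set a := Num.sqrt ((k - 1) * N).
set b := Num.sqrt (k * N).
set s := Num.sqrt x.
have {h1}h1 : N + a <= k * x := h1.
have {h2}h2 : x + s <= 2 * y := h2.
have a0 : 0 <= a by apply: sqrtr_ge0.
have b0 : 0 <= b by apply: sqrtr_ge0.
have s0 : 0 <= s by apply: sqrtr_ge0.
have k0 : 0 <= k by lra.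
have ha : a ^+ 2 = (k - 1) * N by rewrite sqr_sqrtr //; apply: mulr_ge0 => //; lra.
have hb : b ^+ 2 = k * N by rewrite sqr_sqrtr //; apply: mulr_ge0.
have hks : b <= k * s.
  have e : k * s = Num.sqrt (k ^+ 2 * x) by rewrite sqrtrM ?sqrtr_sqr ?ger0_norm // sqr_ge0.
  rewrite e; apply: ler_wsqrtr.
  have : N <= k * x by lra.
  by move=> h; rewrite expr2 -mulrA; apply: ler_wpM2l.
have hc : Num.sqrt ((2 * k - 1) * N) <= a + b.
  have e : (2 * k - 1) * N = a ^+ 2 + b ^+ 2 by rewrite ha hb; ring.
  rewrite e -[X in _ <= X]ger0_norm ?addr_ge0 // -sqrtr_sqr; apply: ler_wsqrtr.
  rewrite sqrrD; have : 0 <= a * b *+ 2 by rewrite mulrn_wge0 // mulr_ge0.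
  lra.
have h3 : k * (x + s) <= k * (2 * y) by apply: ler_wpM2l.
lra.
Qed.

Section Core.
Variable m : nat.

Definition dot (a x : pt m) : bool := \big[addb/false]_(i < m) (a i && x i).

Definition flip (i0 : 'I_m) (u : pt m) : pt m := [ffun j => u j (+) (j == i0)].

Lemma flipK i0 : involutive (flip i0).
Proof. by move=> u; apply/ffunP => j; rewrite !ffunE addbK. Qed.

Lemma dot_flip i0 u p : dot (flip i0 u) p = dot u p (+) p i0.
Proof.
rewrite /dot.
have -> : \big[addb/false]_(i < m) (flip i0 u i && p i) =
  \big[addb/false]_(i < m) ((u i && p i) (+) ((i == i0) && p i)).
  by apply: eq_bigr => i _; rewrite ffunE andb_addl.
rewrite big_split /=; congr (_ (+) _).
rewrite (bigD1 i0) //= eqxx /= big1 ?addbF // => i /negbTE -> //.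
Qed.

Lemma orth (R : realType) (p q : pt m) :
  \sum_(u : pt m) ((-1) ^+ dot u p * (-1) ^+ dot u q : R) =
  if p == q then #|{: pt m}|%:R else 0.
Proof.
case: eqP => [<-|/eqP npq].
  rewrite -sum1_card natr_sum; apply: eq_bigr => u _.
  by rewrite -signr_addb addbb.
have [i0 hi0] : exists i0, p i0 != q i0.
  apply/existsP; apply: contraR npq; rewrite negb_exists => /forallP h.
  by apply/eqP/ffunP => i; apply/eqP; have := h i; rewrite negbK.
set S := \sum_(u : pt m) _.
have hS : S = - S.
  rewrite {2}/S (reindex_inj (can_inj (flipK i0))) /= -sumrN.
  apply: eq_bigr => u _; rewrite !dot_flip !signr_addb.
  by move: hi0; case: (p i0); case: (q i0) => //= _; rewrite !expr0 !expr1 ?mulr1 ?mulrN1 ?mulNr ?mulrN ?opprK // ?mulr1.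
have : 2 * S = 0 by rewrite mulr2n mulrDl mul1r {2}hS subrr.
by move/eqP; rewrite mulf_eq0 pnatr_eq0 orFb => /eqP.
Qed.


Variable R : realType.

Definition W (S : {set pt m}) (f : pt m -> bool) (u : pt m) : R :=
  \sum_(p in S) (-1) ^+ (f p (+) dot u p).

Lemma parseval S f : \sum_(u : pt m) W S f u ^+ 2 = #|{: pt m}|%:R * #|S|%:R.
Proof.
rewrite /W.
under eq_bigr => u _ do rewrite expr2 mulr_suml.
under eq_bigr => u _ do under eq_bigr => p _ do rewrite mulr_sumr.
rewrite exchange_big /=.
rewrite mulr_natr -sumr_const.
apply: eq_bigr => p pS.
rewrite exchange_big /=.
rewrite (bigD1 p) //= [X in _ + X]big1 ?addr0.
  have := orth R p p; rewrite eqxx => <-; apply: eq_bigr => u _.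
  rewrite !signr_addb; set a := (-1) ^+ f p; set b := (-1) ^+ dot u p.
  have a2 : a * a = 1 by rewrite /a -signr_addb addbb.
  by rewrite mulrACA a2 mul1r.
move=> q /andP [_ nqp].
transitivity (\sum_(u : pt m) (-1) ^+ f p * (-1) ^+ f q * ((-1) ^+ dot u p * (-1) ^+ dot u q) : R).
  by apply: eq_bigr => u _; rewrite !signr_addb mulrACA.
by rewrite -mulr_sumr orth eq_sym (negbTE nqp) mulr0.
Qed.


Definition aff (b : bool) (u : pt m) : word (pt m) := [ffun x => b (+) dot u x].

Lemma aff_in b u : aff b u \in RM1 m.
Proof.
rewrite inE; apply/existsP; exists b; apply/existsP; exists u.
by apply/forallP => x; rewrite ffunE.
Qed.

Lemma W_card S f u :
  W S f u = #|S|%:R - 2 * #|S :&: [set p | f p (+) dot u p]|%:R.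
Proof.
rewrite /W (big_setID [set p | f p (+) dot u p]) /=.
have -> : \sum_(i in S :&: [set p | f p (+) dot u p]) (-1) ^+ (f i (+) dot u i) =
   \sum_(i in S :&: [set p | f p (+) dot u p]) (-1 : R).
  by apply: eq_bigr => i; rewrite !inE => /andP [_ ->].
have -> : \sum_(i in S :\: [set p | f p (+) dot u p]) (-1) ^+ (f i (+) dot u i) =
   \sum_(i in S :\: [set p | f p (+) dot u p]) (1 : R).
  by apply: eq_bigr => i; rewrite !inE => /andP [/negbTE -> _].
rewrite !sumr_const -(cardsID [set p | f p (+) dot u p] S) natrD.
rewrite mulNrn; lra.
Qed.

Lemma subset_step (S : {set pt m}) (f : pt m -> bool) : exists w : word (pt m), (w \in RM1 m) &&
  (#|S|%:R + Num.sqrt #|S|%:R <= 2 * #|[set p in S | f p == w p]|%:R :> R).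
Proof.
have [u hu] : exists u, #|S|%:R <= W S f u ^+ 2.
  apply/existsP; apply: contraT; rewrite negb_exists => /forallP h.
  have : \sum_(u : pt m) W S f u ^+ 2 < \sum_(u : pt m) (#|S|%:R : R).
    apply: ltr_sum.
      by apply/hasP; exists [ffun _ => false]; rewrite ?mem_index_enum.
    by move=> v _; have := h v; rewrite real_leNgt ?negbK // realE ?sqr_ge0 ?ler0n.
  by rewrite parseval sumr_const -[X in _ < X]mulr_natr mulrC !card_ffun ltxx.
move: hu; rewrite W_card.
set x := #|S|; set B := [set p | f p (+) dot u p]; set d := #|S :&: B| => hu.
have hsq : Num.sqrt x%:R <= `|x%:R - 2 * d%:R : R|.
  by have := ler_wsqrtr hu; rewrite sqrtr_sqr.
have xd : (x = d + #|S :\: B|)%N by rewrite /d cardsID.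
have e0 : #|[set p in S | f p == aff false u p]| = #|S :\: B|.
  apply: eq_card => p; rewrite /B !inE ffunE /=.
  by case: (p \in S); case: (f p); case: (dot u p).
have e1 : #|[set p in S | f p == aff true u p]| = d.
  apply: eq_card => p; rewrite /B !inE ffunE /=.
  by case: (p \in S); case: (f p); case: (dot u p).
have xR : x%:R = d%:R + #|S :\: B|%:R :> R by rewrite xd natrD.
have [h|h] := lerP 0 (x%:R - 2 * d%:R : R).
  exists (aff false u); rewrite aff_in e0 /=.
  rewrite ger0_norm // in hsq; lra.
exists (aff true u); rewrite aff_in e1 /=.
rewrite ltr0_norm // in hsq; lra.
Qed.


Definition agset {t} (v c : tmat t (pt m)) : {set pt m} := [set p | [forall i, v i p == c i p]].

Lemma core t (v : tmat t (pt m)) : exists c : tmat t (pt m), in_Ct (RM1 m) c &&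
  (#|{: pt m}|%:R + Num.sqrt ((2 ^+ t - 1) * #|{: pt m}|%:R) <= 2 ^+ t * #|agset v c|%:R :> R).
Proof.
elim: t v => [|t IH] v.
  exists v; apply/andP; split; first by apply/forallP => -[].
  have -> : agset v v = setT by apply/setP => p; rewrite !inE; apply/forallP => i.
  by rewrite expr0 subrr mul0r sqrtr0 addr0 mul1r cardsT.
have [c' /andP [hc' hk]] := IH [ffun i : 'I_t => v (lift ord_max i)].
set S := agset _ c' in hk.
have [w /andP [hw hS]] := subset_step S (v ord_max).
exists [ffun i => if unlift ord_max i is Some j then c' j else w].
apply/andP; split.
  apply/forallP => i; rewrite ffunE; case: unliftP => [j|] _ //.
  exact: (forallP hc' j).
have -> : agset v [ffun i => if unlift ord_max i is Some j then c' j else w]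
   = [set p in S | v ord_max p == w p].
  apply/setP => p; rewrite !inE; apply/forallP/andP.
    move=> h; split.
      apply/forallP => j; have := h (lift ord_max j); rewrite !ffunE liftK //.
    by have := h ord_max; rewrite ffunE unlift_none.
  case=> /forallP h1 h2 i; rewrite ffunE; case: unliftP => [j ->|-> //].
  by have := h1 j; rewrite !ffunE.
rewrite exprS; apply: (@real_step R _ _ _ _ _ _ _ hk hS).
- exact: ler0n.
- by rewrite exprn_ege1 // ler1n.
- exact: ler0n.
Qed.

Lemma dt_agset t (v c : tmat t (pt m)) : (d_t v c + #|agset v c| = #|{: pt m}|)%N.
Proof.
rewrite -(cardsC (agset v c)) addnC; congr (_ + _)%N.
rewrite /d_t /wt_t; apply: eq_card => p; rewrite !inE negb_forall.
by apply: eq_existsb => i; rewrite !ffunE; case: (v i p); case: (c i p).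
Qed.

End Core.

Lemma bigmin_le (I : eqType) (r : seq I) (P : pred I) (F : I -> nat) idx i0 :
  i0 \in r -> P i0 -> (\big[minn/idx]_(i <- r | P i) F i <= F i0)%N.
Proof.
elim: r => //= a r IH; rewrite inE big_cons => /orP [/eqP -> Pi|ir Pi].
  by rewrite Pi; apply: geq_minl.
case: ifP => _; last exact: IH.
exact: leq_trans (geq_minr _ _) (IH ir Pi).
Qed.

Theorem lemma10 (R : realType) (m t : nat) :
  (Rt1 t m)%:R <=
    (1 - 1 / 2 ^+ t) * 2 ^+ m
    - Num.sqrt (2 ^+ t - 1) / 2 ^+ t * Num.sqrt (2 ^+ m) :> R.
Proof.
pose cf (v : tmat t (pt m)) := xchoose (core m R t v).
have hcf v := xchooseP (core m R t v).
pose rho := (\max_(v : tmat t (pt m)) d_t v (cf v))%N.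
have dle v : (d_t v (cf v) <= #|{: pt m}|)%N by rewrite -(dt_agset m t v (cf v)) leq_addr.
have rhoN : (rho < #|{: pt m}|.+1)%N.
  by rewrite ltnS; apply/bigmax_leqP => v _; apply: dle.
have cov : covers_t t (RM1 m) rho.
  apply/forallP => v; apply/existsP; exists (cf v).
  by rewrite (andP (hcf v)).1 /= /rho (leq_bigmax v).
have Rle : (Rt1 t m <= rho)%N.
  rewrite /Rt1 /Rt; exact: (@bigmin_le _ _ _ (fun i : 'I__ => nat_of_ord i) _ (Ordinal rhoN) (mem_index_enum _) cov).
apply: (le_trans (y := rho%:R)); first by rewrite ler_nat.
have cp : (0 < #|{: tmat t (pt m)}|)%N.
  by apply/card_gt0P; exists [ffun _ => [ffun _ => false]].
have [v0 hv0] := @bigop.eq_bigmax _ (fun v => d_t v (cf v)) cp.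
rewrite /rho hv0.
have hd := dt_agset m t v0 (cf v0).
have hk : #|{: pt m}|%:R + Num.sqrt ((2 ^+ t - 1) * #|{: pt m}|%:R)
   <= 2 ^+ t * #|agset m v0 (cf v0)|%:R :> R := (andP (hcf v0)).2.
move: hd hk; move: #|agset m v0 (cf v0)| (d_t v0 (cf v0)) => ag d.
have -> : #|{: pt m}| = (2 ^ m)%N by rewrite card_ffun card_bool card_ord.
move=> hd hk.
have dR : d%:R = 2 ^+ m - ag%:R :> R by rewrite -natrX -hd natrD addrK.
rewrite dR; rewrite natrX in hk.
have k0 : 0 < 2 ^+ t :> R by rewrite exprn_gt0.
have k1 : 0 <= 2 ^+ t - 1 :> R by rewrite subr_ge0 exprn_ege1 // ler1n.
rewrite sqrtrM // in hk.
have e : (1 - 1 / 2 ^+ t) * 2 ^+ m - Num.sqrt (2 ^+ t - 1) / 2 ^+ t * Num.sqrt (2 ^+ m)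
   = 2 ^+ m - (2 ^+ m + Num.sqrt (2 ^+ t - 1) * Num.sqrt (2 ^+ m)) / 2 ^+ t :> R.
  by field; rewrite expf_neq0 // pnatr_eq0.
by rewrite e lerD2l lerN2 ler_pdivrMr // [ag%:R * _]mulrC.
Qed.
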